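(* Fix $K,n\in\mathbb{N}$ and $C>0$, and let $X\in[0,C]^K$ and $Y\subseteq[K]$ be (not necessarily independent) random variables with $Y\neq\emptyset$ almost surely. For $V,V_0\in\mathbb{R}^K$ define $f(X,Y;V)=\max_{k\in Y}\{X(k)+V(k)\}$ and $\Delta f(X,Y;V,V_0)=f(X,Y;V)-f(X,Y;V_0)$. Let $\{(X_i,Y_i)\}_{i\in[n]}$ be $n$ i.i.d. samples from the joint distribution of $(X,Y)$. Then for any $\delta\in(0,1)$, $V_0\in\mathbb{R}^K$ and $\alpha\in(0,1]$, with probability at least $1-\delta$, simultaneously for all $V\in\mathbb{R}^K$ with $V-V_0\in[0,C]^K$, $$\frac1n\sum_{i=1}^n\Delta f(X_i,Y_i;V,V_0)\le(1+\alpha)\mathbb{E}[\Delta f(X,Y;V,V_0)]+\frac{2CK\ln\frac{3n}{\delta}}{\alpha n}.$$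
   Context: $[K]=\{1,\dots,K\}$; $[0,C]^K$ is the set of vectors with all entries in $[0,C]$. *)

(* Defs.v *)
From HB Require Import structures.
From mathcomp Require Import all_boot all_order all_algebra.
From mathcomp Require Import all_classical all_reals all_analysis.
Set Implicit Arguments. Unset Strict Implicit. Unset Printing Implicit Defensive.
Import Order.TTheory GRing.Theory Num.Theory.
Local Open Scope classical_set_scope.
Local Open Scope ring_scope.

(* f(X,Y;V) = max_{k in Y} (X k + V k); value 0 on the (null) event Y = set0. *)
Definition fmax (R : realType) (K : nat) (x : 'I_K -> R) (y : {set 'I_K})
    (v : 'I_K -> R) : R :=
  match [pick k in y] with
  | Some k0 => \big[Num.max/(x k0 + v k0)]_(k in y) (x k + v k)
  | None => 0
  end.

Definition dfmax (R : realType) (K : nat) (x : 'I_K -> R) (y : {set 'I_K})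
    (v v0 : 'I_K -> R) : R :=
  fmax x y v - fmax x y v0.

(* The event {X in B_1 x ... x B_K, Y in A}: a measurable rectangle for the data
   (X,Y) valued in R^K x 2^[K]; these rectangles form a pi-system containing the
   whole space and generating the sigma-algebra of the data space. *)
Definition rect_event (R : realType) (T : Type) (K : nat)
    (X : T -> 'I_K -> R) (Y : T -> {set 'I_K})
    (B : 'I_K -> set R) (A : {set {set 'I_K}}) : set T :=
  [set t | (forall k, B k (X t k)) /\ Y t \in A].

Definition data_measurable (d : measure_display) (T : measurableType d)
    (R : realType) (K : nat) (X : T -> 'I_K -> R) (Y : T -> {set 'I_K}) : Prop :=
  (forall k, measurable_fun setT (fun t => X t k)) /\
  (forall S : {set 'I_K}, measurable (Y @^-1` [set S])).

Definition same_law (d d' : measure_display) (T : measurableType d)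
    (Om : measurableType d') (R : realType) (K : nat)
    (Q : probability T R) (X : T -> 'I_K -> R) (Y : T -> {set 'I_K})
    (P : probability Om R) (X' : Om -> 'I_K -> R) (Y' : Om -> {set 'I_K}) : Prop :=
  forall (B : 'I_K -> set R) (A : {set {set 'I_K}}),
    (forall k, measurable (B k)) ->
    P (rect_event X' Y' B A) = Q (rect_event X Y B A).

(* Mutual independence of the family ((Xs i, Ys i))_{i < n} under P: product
   rule on all measurable rectangles (subfamilies are obtained by taking the
   whole space, B = setT and A = setT, for the remaining indices). *)
Definition mutually_independent (d' : measure_display) (Om : measurableType d')
    (R : realType) (K n : nat) (P : probability Om R)
    (Xs : 'I_n -> Om -> 'I_K -> R) (Ys : 'I_n -> Om -> {set 'I_K}) : Prop :=
  forall (B : 'I_n -> 'I_K -> set R) (A : 'I_n -> {set {set 'I_K}}),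
    (forall i k, measurable (B i k)) ->
    P (\bigcap_(i in [set: 'I_n]) rect_event (Xs i) (Ys i) (B i) (A i)) =
    (\prod_(i < n) P (rect_event (Xs i) (Ys i) (B i) (A i)))%E.

(* Main.v *)
Require Import Defs.
From HB Require Import structures.
From mathcomp Require Import all_boot all_order all_algebra.
From mathcomp Require Import all_classical all_reals all_analysis.
From mathcomp Require Import measurable_realfun.
From mathcomp Require Import ring lra.
Import Order.TTheory GRing.Theory Num.Theory.
Local Open Scope classical_set_scope.
Local Open Scope ring_scope.
Set Implicit Arguments. Unset Strict Implicit. Unset Printing Implicit Defensive.

Lemma p5_aux (R : realFieldType) (x : R) : 0 <= x -> x <= 1 ->
  1 <= (1 + x + x^+2) * (1 - x + 7/16*x^+2 - 7/64 * x^+3 + 35/2048*x^+4 - 7/4096*x^+5).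
Proof. move=> h0 h1.
have h2 : x^+5 <= x^+4 by rewrite exprS ler_piMl ?exprn_ge0.
have h3 : x^+3 <= x^+2 by rewrite exprS ler_piMl ?exprn_ge0.
have h4: 0 <= x^+2 by rewrite exprn_ge0.
have h5: 0 <= x^+3 by rewrite exprn_ge0.
have h6: 0 <= x^+4 by rewrite exprn_ge0.
have Heq : (1 + x + x^+2) * (1 - x + 7/16*x^+2 - 7/64 * x^+3 + 35/2048*x^+4 - 7/4096*x^+5) - 1 = x^+2 * (7/16 - 43/64 * x + 707/2048 * x^+2 - 385/4096 * x^+3 + 63/4096 * x^+4 - 7/4096 * x^+5).
  by rewrite !exprS !expr0; field.
rewrite -subr_ge0 Heq.
apply: mulr_ge0; first exact: h4.
have : 0 <= 7/16 - 43/64 * x + 2029/8192 * x^+2 :> R.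
  rewrite expr2; nra.
lra.
Qed.

Lemma p8_aux (R : realFieldType) (x : R) : 0 <= x -> x <= 1 ->
  1 - x + 7/16*x^+2 - 7/64 * x^+3 + 35/2048*x^+4 - 7/4096*x^+5 <= (1-x/8)^+8.
Proof. move=> h0 h1.
have Heq : (1-x/8)^+8 - (1 - x + 7/16*x^+2 - 7/64 * x^+3 + 35/2048*x^+4 - 7/4096*x^+5) = (x/8)^+6 * (28 - x + (x/8)^+2).
  by rewrite !exprS !expr0; field.
rewrite -subr_ge0 Heq; apply: mulr_ge0; first by rewrite exprn_ge0 // divr_ge0.
rewrite expr2; nra.
Qed.

Lemma expR_le_quad (R : realType) (x : R) : 0 <= x -> x <= 1 ->
  expR x <= 1 + x + x^+2.
Proof.
move=> h0 h1.
set P := (1 - x + 7/16*x^+2 - 7/64 * x^+3 + 35/2048*x^+4 - 7/4096*x^+5).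
have hP : 1 <= (1 + x + x^+2) * P := @p5_aux R x h0 h1.
have hq : 0 < 1 + x + x^+2 by have := exprn_ge0 2 h0; lra.
have Ppos : 0 < P.
  rewrite -(pmulr_rgt0 _ hq); lra.
have hE : P <= expR (- x).
  apply: (le_trans (@p8_aux R x h0 h1)).
  have -> : - x = 8%:R * (- (x/8)) by field.
  rewrite expRM_natl; apply: lerXn2r; rewrite ?nnegrE ?expR_ge0 //; first lra.
  by have := expR_ge1Dx (- (x/8)); lra.
have ex : expR x = (expR (- x))^-1 by rewrite expRN invrK.
rewrite ex; apply: (@le_trans _ _ (P^-1)).
  by rewrite lef_pV2 ?posrE ?expR_gt0.
by rewrite -[P^-1]mul1r ler_pdivrMr.
Qed.

Lemma fmax_le (R : realType) (K : nat) (x x' v v' : 'I_K -> R) (y : {set 'I_K}) (c : R) :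
  0 <= c -> (forall k, k \in y -> x k + v k <= x' k + v' k + c) ->
  fmax x y v <= fmax x' y v' + c.
Proof.
move=> c0 H; rewrite /fmax; case: pickP => [k0 k0y|_]; last by rewrite add0r.
have key : forall k, k \in y -> x k + v k <=
    \big[Num.max/(x' k0 + v' k0)]_(k in y) (x' k + v' k) + c.
  move=> k ky; apply: (le_trans (H k ky)); rewrite lerD2r.
  exact: (@bigmax_sup _ _ _ _ k).
apply: bigmax_le; first exact: key.
exact: key.
Qed.

Lemma dfmax_ge0 (R : realType) (K : nat) (x : 'I_K -> R) y (V V0 : 'I_K -> R) :
  (forall k, 0 <= V k - V0 k) -> 0 <= dfmax x y V V0.
Proof.
move=> H; rewrite /dfmax subr_ge0 -[X in _ <= X]addr0; apply: fmax_le => // k _.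
by rewrite addr0 lerD2l -subr_ge0.
Qed.

Lemma dfmax_leC (R : realType) (K : nat) (x : 'I_K -> R) y (V V0 : 'I_K -> R) (C : R) :
  0 <= C -> (forall k, V k - V0 k <= C) -> dfmax x y V V0 <= C.
Proof.
move=> C0 H; rewrite /dfmax lerBlDl; apply: fmax_le => // k _.
by have := H k; lra.
Qed.

Lemma dfmax_monoV (R : realType) (K : nat) (x : 'I_K -> R) y (V V' V0 : 'I_K -> R) :
  (forall k, V k <= V' k) -> dfmax x y V V0 <= dfmax x y V' V0.
Proof.
move=> H; rewrite /dfmax lerD2r -[X in _ <= X]addr0; apply: fmax_le => // k _.
by rewrite addr0 lerD2l.
Qed.

Lemma dfmax_lipV (R : realType) (K : nat) (x : 'I_K -> R) y (V V' V0 : 'I_K -> R) (h : R) :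
  0 <= h -> (forall k, V' k <= V k + h) -> dfmax x y V' V0 <= dfmax x y V V0 + h.
Proof.
move=> h0 H; rewrite /dfmax.
have := @fmax_le R K x x V' V y h h0 (fun k _ => _).
have H' : forall k, x k + V' k <= x k + V k + h by move=> k; have := H k; lra.
move=> /(_ H'); lra.
Qed.

Lemma dfmax_lipX (R : realType) (K : nat) (x x' : 'I_K -> R) y (V V0 : 'I_K -> R) (e : R) :
  0 <= e -> (forall k, x' k <= x k <= x' k + e) ->
  dfmax x' y V V0 <= dfmax x y V V0 + e /\ dfmax x y V V0 <= dfmax x' y V V0 + e.
Proof.
move=> e0 H; rewrite /dfmax.
have h1 : fmax x' y V <= fmax x y V + 0.
  by apply: fmax_le => // k _; have := H k; lra.
have h2 : fmax x y V <= fmax x' y V + e.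
  by apply: fmax_le => // k _; have := H k; lra.
have h3 : fmax x' y V0 <= fmax x y V0 + 0.
  by apply: fmax_le => // k _; have := H k; lra.
have h4 : fmax x y V0 <= fmax x' y V0 + e.
  by apply: fmax_le => // k _; have := H k; lra.
split; lra.
Qed.

Lemma measurable_bigmax (d : measure_display) (T : measurableType d) (R : realType)
  (I : Type) (r : seq I) (P : pred I) (x0 : T -> R) (F : I -> T -> R) :
  measurable_fun setT x0 -> (forall i, measurable_fun setT (F i)) ->
  measurable_fun setT (fun t => \big[Num.max/x0 t]_(i <- r | P i) F i t).
Proof.
move=> m0 mF; elim: r => [|h r IH].
  by under eq_fun do rewrite big_nil.
under eq_fun do rewrite big_cons.
case: (P h) => //.
exact: measurable_maxr.
Qed.

Lemma measurable_fmaxS (d : measure_display) (T : measurableType d) (R : realType)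
  (K : nat) (X : T -> 'I_K -> R) (S : {set 'I_K}) (V : 'I_K -> R) :
  (forall k, measurable_fun setT (fun t => X t k)) ->
  measurable_fun setT (fun t => fmax (X t) S V).
Proof.
move=> mX; rewrite /fmax; case: pickP => [k0 _|_]; last exact: measurable_cst.
apply: measurable_bigmax => [|k]; apply: measurable_funD => //; exact: measurable_cst.
Qed.

Lemma measurable_dfmax (d : measure_display) (T : measurableType d) (R : realType)
  (K : nat) (X : T -> 'I_K -> R) (Y : T -> {set 'I_K}) (V V0 : 'I_K -> R) :
  data_measurable X Y ->
  measurable_fun setT (fun t => dfmax (X t) (Y t) V V0).
Proof.
move=> [mX mY].
have -> : (fun t => dfmax (X t) (Y t) V V0) =
    (fun t => \sum_(S : {set 'I_K}) (\1_(Y @^-1` [set S]) t : R) * dfmax (X t) S V V0).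
  apply/funext => t; rewrite (bigD1 (Y t)) //= big1 ?addr0.
    by rewrite indicE mem_set // mul1r.
  move=> S /negPf SY; rewrite indicE memNset ?mul0r //= => YS.
  by move: SY; rewrite YS eqxx.
apply: measurable_sum => S; apply: measurable_funM.
  by apply: measurable_indic; apply: mY.
by apply: measurable_funB; apply: measurable_fmaxS.
Qed.

Lemma rect_measurable (d : measure_display) (T : measurableType d) (R : realType)
  (K : nat) (X : T -> 'I_K -> R) (Y : T -> {set 'I_K}) (B : 'I_K -> set R)
  (A : {set {set 'I_K}}) :
  data_measurable X Y -> (forall k, measurable (B k)) ->
  measurable (rect_event X Y B A).
Proof.
move=> [mX mY] mB.
have -> : rect_event X Y B A =
    (\bigcap_(k in [set: 'I_K]) ((fun t => X t k) @^-1` B k)) `&`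
    (\bigcup_(S in [set S | S \in A]) (Y @^-1` [set S])).
  apply/seteqP; split => t /=.
    by move=> [h1 h2]; split; [move=> k _; exact: h1 | exists (Y t)].
  move=> [h1 [S /= SA YS]]; rewrite /rect_event /= YS; split => // k; exact: h1.
apply: measurableI.
  apply: fin_bigcap_measurable; first exact: finite_finset.
  by move=> k _; rewrite -[_ @^-1` _]setTI; apply: mX => //; exact: mB.
apply: fin_bigcup_measurable; first exact: finite_finset.
by move=> S _; apply: mY.
Qed.

Lemma le_measure_bigsetU (d : measure_display) (T : measurableType d) (R : realType)
  (mu : {measure set T -> \bar R}) (I : Type) (r : seq I) (P : pred I) (F : I -> set T) :
  (forall i, measurable (F i)) ->
  (mu (\big[setU/set0]_(i <- r | P i) F i) <= \sum_(i <- r | P i) mu (F i))%E.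
Proof.
move=> mF; elim: r => [|h r IH]; first by rewrite !big_nil measure0.
rewrite !big_cons; case: (P h) => //.
apply: (le_trans (measureU2 _ _ _)) => //; first exact: bigsetU_measurable.
exact: leeD2l.
Qed.

Lemma chernoff_fin (R : realType) (J : finType) (n : nat) (a q : J -> R) (C al b : R) :
  0 < C -> 0 < al <= 1 -> (forall c, 0 <= a c <= C) -> (forall c, 0 <= q c) ->
  \sum_c q c <= 1 ->
  \sum_(f : {ffun 'I_n -> J} | n%:R * ((1 + al) * (\sum_c a c * q c) + b) <= \sum_i a (f i))
     \prod_i q (f i) <= expR (- (al * n%:R * b / C)).
Proof.
move=> C0 /andP[al0 al1] ha hq hq1.
set mu := \sum_c a c * q c.
set s := n%:R * ((1 + al) * mu + b).
set lam := al / C.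
have lam0 : 0 <= lam by rewrite divr_ge0 // ltW.
have mu0 : 0 <= mu by apply: sumr_ge0 => c _; apply: mulr_ge0 => //; case/andP: (ha c).
have pq0 : forall f : {ffun 'I_n -> J}, 0 <= \prod_i q (f i).
  by move=> f; apply: prodr_ge0 => i _.
apply: (@le_trans _ _ (\sum_(f : {ffun 'I_n -> J})
    expR (- (lam * s)) * \prod_i (expR (lam * a (f i)) * q (f i)))).
  rewrite big_mkcond; apply: ler_sum => f _; case: ifP => H; last first.
    by apply: mulr_ge0; [exact: expR_ge0| apply: prodr_ge0 => i _; apply: mulr_ge0 => //; exact: expR_ge0].
  rewrite big_split /= mulrA -expR_sum -expRD.
  rewrite -[X in X <= _]mul1r; apply: ler_wpM2r => //.
  apply: le_trans (expR_ge1Dx _).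
  rewrite lerDl -mulr_sumr.
  have : lam * s <= lam * \sum_i a (f i) by apply: ler_wpM2l.
  lra.
rewrite -mulr_sumr -(bigA_distr_bigA (fun (i : 'I_n) (c : J) => expR (lam * a c) * q c)) /= prodr_const card_ord.
set G := \sum_c expR (lam * a c) * q c.
have G0 : 0 <= G by apply: sumr_ge0 => c _; apply: mulr_ge0 => //; exact: expR_ge0.
have hG : G <= expR (lam * (1 + al) * mu).
  apply: (@le_trans _ _ (1 + lam * (1 + al) * mu)); last first.
    exact: expR_ge1Dx.
  apply: (@le_trans _ _ (\sum_c (1 + lam * (1 + al) * a c) * q c)).
    apply: ler_sum => c _; apply: ler_wpM2r => //.
    have [a0 aC] := andP (ha c).
    have y0 : 0 <= lam * a c by apply: mulr_ge0.
    have y1 : lam * a c <= al.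
      by rewrite /lam mulrAC ler_pdivrMr // ler_pM2l.
    apply: (le_trans (@expR_le_quad R _ y0 (le_trans y1 al1))).
    have : lam * a c * (lam * a c) <= lam * a c * al by apply: ler_wpM2l.
    have -> : lam * (1 + al) * a c = lam * a c + lam * a c * al by ring.
    rewrite expr2; lra.
  under eq_bigr do rewrite mulrDl mul1r.
  rewrite big_split /=.
  have -> : \sum_c lam * (1 + al) * a c * q c = lam * (1 + al) * mu.
    by rewrite /mu mulr_sumr; apply: eq_bigr => c _; ring.
  by rewrite lerD2r.
apply: (@le_trans _ _ (expR (- (lam * s)) * expR (lam * (1 + al) * mu) ^+ n)).
  by apply: ler_wpM2l; [exact: expR_ge0 | apply: lerXn2r; rewrite ?nnegrE ?expR_ge0].
rewrite -expRM_natl -expRD /s /lam.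
have -> : - (al / C * (n%:R * ((1 + al) * mu + b))) + n%:R * (al / C * (1 + al) * mu) =
    - (al * n%:R * b / C) by ring.
by [].
Qed.

Lemma int_lb (d : measure_display) (T : measurableType d) (R : realType)
  (Q : {measure set T -> \bar R}) (J : finType) (D : J -> set T) (psi : J -> R)
  (f : T -> R) :
  (forall c, measurable (D c)) -> (forall c, 0 <= psi c) ->
  (forall c c' t, D c t -> D c' t -> c = c') ->
  (forall c t, D c t -> psi c <= f t) -> (forall t, 0 <= f t) ->
  measurable_fun setT f ->
  (\sum_c (psi c)%:E * Q (D c) <= \int[Q]_t (f t)%:E)%E.
Proof.
move=> mD psi0 uD hpsi f0 mf.
have mg : forall c, measurable_fun setT (fun t => psi c * \1_(D c) t).
  move=> c; apply: measurable_funM; [exact: measurable_cst | exact: measurable_indic].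
have -> : (\sum_c (psi c)%:E * Q (D c) =
    \int[Q]_t (\sum_c (psi c * \1_(D c) t))%:E)%E.
  under [X in _ = X]eq_integral do rewrite -sumEFin.
  rewrite ge0_integral_sum //; last first.
    - by move=> c t _; rewrite lee_fin; apply: mulr_ge0 => //; rewrite indicE.
    - by move=> c; apply/measurable_EFinP; exact: mg.
  apply: eq_bigr => c _.
  rewrite (@integralZl_indic _ _ _ _ _ measurableT (fun _ => D c)) //.
    by rewrite integral_indic // setIT.
  by move=> /lt_geF; rewrite psi0.
apply: ge0_le_integral => //.
- by move=> t _; rewrite lee_fin; apply: sumr_ge0 => c _; apply: mulr_ge0 => //; rewrite indicE.
- by apply/measurable_EFinP; apply: measurable_sum => c; exact: mg.
- by apply/measurable_EFinP.
move=> t _; rewrite lee_fin.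
have [[c Dc]|nD] := pselect (exists c, D c t).
  rewrite (bigD1 c) //= big1 ?addr0.
    by rewrite indicE mem_set // mulr1; exact: hpsi.
  move=> c' c'c; rewrite indicE memNset ?mulr0 // => Dc'.
  by move: c'c; rewrite (uD _ _ _ Dc' Dc) eqxx.
rewrite big1 //; move=> c _; rewrite indicE memNset ?mulr0 // => Dc.
by apply: nD; exists c.
Qed.

Definition cellB (R : realType) (K M : nat) (e : R)
  (c : ({ffun 'I_K -> 'I_M} * {set 'I_K})%type) (k : 'I_K) : set R :=
  [set r | (c.1 k)%:R * e <= r < (c.1 k).+1%:R * e].

Definition cellA (K M : nat) (c : ({ffun 'I_K -> 'I_M} * {set 'I_K})%type) :
  {set {set 'I_K}} := [set c.2].

Definition corner (R : realType) (K M : nat) (e : R)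
  (c : ({ffun 'I_K -> 'I_M} * {set 'I_K})%type) : 'I_K -> R :=
  fun k => (c.1 k)%:R * e.

Definition gridV (R : realType) (K m : nat) (V0 : 'I_K -> R) (h : R)
  (g : {ffun 'I_K -> 'I_m.+1}) : 'I_K -> R :=
  fun k => V0 k + (g k)%:R * h.

Definition aval (R : realType) (K M m : nat) (C e h : R) (V0 : 'I_K -> R)
  (g : {ffun 'I_K -> 'I_m.+1}) (c : ({ffun 'I_K -> 'I_M} * {set 'I_K})%type) : R :=
  Num.min C (dfmax (corner e c) c.2 (gridV V0 h g) V0 + e).

Lemma cellB_meas (R : realType) (K M : nat) (e : R) c k :
  measurable (@cellB R K M e c k).
Proof.
have -> : @cellB R K M e c k = `[(c.1 k)%:R * e, (c.1 k).+1%:R * e[%classic.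
  by apply/seteqP; split => r; rewrite /cellB /= in_itv.
exact: measurable_itv.
Qed.

Lemma nat_itv_uniq (R : realType) (e r : R) (j j' : nat) : 0 < e ->
  j%:R * e <= r < j.+1%:R * e -> j'%:R * e <= r < j'.+1%:R * e -> j = j'.
Proof.
move=> e0 /andP[h1 h2] /andP[h3 h4].
case: (ltngtP j j') => // H.
  have ? : j.+1%:R * e <= j'%:R * e by rewrite ler_pM2r // ler_nat.
  clear H; exfalso; lra.
have ? : j'.+1%:R * e <= j%:R * e by rewrite ler_pM2r // ler_nat.
clear H; exfalso; lra.
Qed.

Lemma cell_uniq (R : realType) (K M : nat) (e : R) (x : 'I_K -> R) c c' : 0 < e ->
  (forall k, @cellB R K M e c k (x k)) -> (forall k, @cellB R K M e c' k (x k)) ->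
  c.2 = c'.2 -> c = c'.
Proof.
move=> e0 h h' e2; case: c c' h h' e2 => [j S] [j' S'] /= h h' ->; congr pair.
apply/ffunP => k; apply: val_inj => /=.
exact: (nat_itv_uniq e0 (h k) (h' k)).
Qed.

Lemma cell_exists (R : realType) (K M : nat) (e C : R) (x : 'I_K -> R) (y : {set 'I_K}) :
  0 < e -> C / e < M.+1%:R -> (forall k, 0 <= x k <= C) ->
  exists c, (forall k, @cellB R K M.+1 e c k (x k)) /\ c.2 = y.
Proof.
move=> e0 hM hx.
exists ([ffun k => inord (Num.truncn (x k / e))], y); split => // k.
have [x0 xC] := andP (hx k).
have xe0 : 0 <= x k / e by rewrite divr_ge0 // ltW.
have lt : (Num.truncn (x k / e) < M.+1)%N.
  rewrite ltnS truncn_le_nat; apply: le_lt_trans hM.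
  by rewrite ler_pM2r ?invr_gt0.
rewrite /cellB /= ffunE inordK //.
have /andP[t1 t2] := truncn_itv xe0.
by rewrite -ler_pdivlMr // -ltr_pdivrMr // t1 t2.
Qed.

Lemma grid_exists (R : realType) (K m : nat) (C h : R) (V V0 : 'I_K -> R) :
  0 < h -> m%:R * h = C -> (forall k, 0 <= V k - V0 k <= C) ->
  exists g : {ffun 'I_K -> 'I_m.+1}, forall k, V k <= gridV V0 h g k <= V k + h.
Proof.
move=> h0 mh hV.
exists [ffun k => inord (minn m (Num.truncn ((V k - V0 k) / h)).+1)] => k.
rewrite /gridV ffunE inordK; last by rewrite ltnS geq_minl.
have [D0 DC] := andP (hV k).
set t := Num.truncn _.
have De0 : 0 <= (V k - V0 k) / h by rewrite divr_ge0 // ltW.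
have /andP[t1 t2] := truncn_itv De0.
rewrite -/t ler_pdivlMr // in t1; rewrite -/t ltr_pdivrMr // in t2.
have H2 : t.+1%:R * h = t%:R * h + h by rewrite -natr1 mulrDl mul1r.
case: (leqP m t.+1) => H.
  have H3 : m%:R * h <= t.+1%:R * h by rewrite ler_pM2r // ler_nat.
  rewrite mh; rewrite mh in H3; apply/andP; split; clear H; lra.
apply/andP; split; clear H; lra.
Qed.


Lemma gridV_bounds (R : realType) (K m : nat) (C h : R) (V0 : 'I_K -> R) g k :
  0 <= h -> m%:R * h = C ->
  0 <= @gridV R K m V0 h g k - V0 k <= C.
Proof.
move=> h0 mh; rewrite /gridV addrC addKr; apply/andP; split.
  by apply: mulr_ge0.
rewrite -mh; apply: ler_wpM2r => //; rewrite ler_nat -ltnS; exact: ltn_ord.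
Qed.

Lemma cell_corner (R : realType) (K M : nat) (e : R) c (x : 'I_K -> R) k :
  @cellB R K M e c k (x k) -> corner e c k <= x k <= corner e c k + e.
Proof.
rewrite /cellB /corner /= => /andP[h1 h2]; rewrite h1 /=.
by rewrite -natr1 mulrDl mul1r in h2; apply: ltW.
Qed.

Lemma aval_bounds (R : realType) (K M m : nat) (C e h : R) (V0 : 'I_K -> R) g c :
  0 < e -> 0 <= C -> 0 <= h -> m%:R * h = C ->
  0 <= @aval R K M m C e h V0 g c <= C.
Proof.
move=> e0 C0 h0 mh; rewrite /aval; apply/andP; split.
  rewrite le_min C0 /=; apply: addr_ge0; last exact: ltW.
  apply: dfmax_ge0 => k; have := gridV_bounds V0 g k h0 mh; by case/andP.
by rewrite ge_min lexx.
Qed.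

Lemma aval_upper (R : realType) (K M m : nat) (C e h : R) (V0 : 'I_K -> R) g c
  (x : 'I_K -> R) :
  0 < e -> 0 <= h -> m%:R * h = C -> (forall k, @cellB R K M e c k (x k)) ->
  dfmax x c.2 (gridV V0 h g) V0 <= @aval R K M m C e h V0 g c.
Proof.
move=> e0 h0 mh hx; rewrite /aval le_min; apply/andP; split.
  apply: dfmax_leC; first by rewrite -mh mulr_ge0.
  by move=> k; have := gridV_bounds V0 g k h0 mh; case/andP.
have := @dfmax_lipX R K x (corner e c) c.2 (gridV V0 h g) V0 e (ltW e0)
  (fun k => cell_corner (hx k)).
by case.
Qed.

Lemma psi_lower (R : realType) (K M m : nat) (C e h : R) (V V0 : 'I_K -> R) g c
  (x : 'I_K -> R) :
  0 < e -> 0 <= h -> (forall k, 0 <= V k - V0 k) ->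
  (forall k, V k <= gridV V0 h g k <= V k + h) ->
  (forall k, @cellB R K M e c k (x k)) ->
  Num.max 0 (@aval R K M m C e h V0 g c - (h + 2 * e)) <= dfmax x c.2 V V0.
Proof.
move=> e0 h0 hV hg hx; rewrite ge_max; apply/andP; split.
  exact: dfmax_ge0.
have h1 : @aval R K M m C e h V0 g c <= dfmax (corner e c) c.2 (gridV V0 h g) V0 + e.
  by rewrite /aval ge_min lexx orbT.
have [h2 _] := @dfmax_lipX R K x (corner e c) c.2 (gridV V0 h g) V0 e (ltW e0)
  (fun k => cell_corner (hx k)).
have h3 := @dfmax_lipV R K x c.2 V (gridV V0 h g) V0 h h0 (fun k => proj2 (andP (hg k))).
lra.
Qed.

Lemma eq_le_trans (disp : Order.disp_t) (U : porderType disp) (x y z : U) :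
  x = y -> (y <= z)%O -> (x <= z)%O.
Proof. by move=> ->. Qed.

Lemma Dt_uniq (R : realType) (T : Type) (K M : nat) (e : R) (X : T -> 'I_K -> R)
  (Y : T -> {set 'I_K}) c c' t : 0 < e ->
  rect_event X Y (@cellB R K M e c) (cellA c) t ->
  rect_event X Y (@cellB R K M e c') (cellA c') t -> c = c'.
Proof.
move=> e0 [h1 h2] [h1' h2']; apply: (cell_uniq e0 h1 h1').
by move: h2 h2'; rewrite /cellA !inE => /eqP <- /eqP <-.
Qed.

Lemma qsum_le1 (d : measure_display) (T : measurableType d) (R : realType)
  (Q : probability T R) (K M : nat) (e : R) (X : T -> 'I_K -> R) (Y : T -> {set 'I_K}) :
  0 < e -> data_measurable X Y ->
  \sum_(c : ({ffun 'I_K -> 'I_M} * {set 'I_K})%type)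
     fine (Q (rect_event X Y (@cellB R K M e c) (cellA c))) <= 1.
Proof.
move=> e0 hXY.
have := @int_lb d T R Q _ (fun c => rect_event X Y (@cellB R K M e c) (cellA c))
  (fun _ => 1) (fun _ => 1).
move=> /(_ (fun c => rect_measurable _ hXY (fun k => cellB_meas e c k))).
move=> /(_ (fun _ => ler01)).
move=> /(_ (fun c c' t => @Dt_uniq R T K M e X Y c c' t e0)).
move=> /(_ (fun _ _ _ => lexx _) (fun _ => ler01) (measurable_cst _)).
have -> : (fun t : T => (1%R)%:E) = cst 1%E by [].
rewrite integral_cst //.
move=> H.
have H1 : (1%:E * Q [set: T] <= 1)%E.
  by rewrite mul1e; exact: probability_le1.
have {H H1} := le_trans H H1.
under eq_bigr do rewrite mul1e.
move=> H; rewrite -lee_fin -sumEFin.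
apply: le_trans _ H; rewrite le_eqVlt; apply/orP; left; apply/eqP.
apply: eq_bigr => c _; rewrite fineK // fin_num_measure //.
exact: (rect_measurable _ hXY (fun k => cellB_meas e _ k)).
Qed.

Lemma in_bigsetU (T : Type) (I : eqType) (r : seq I) (P : pred I) (F : I -> set T) i t :
  i \in r -> P i -> F i t -> (\big[setU/set0]_(j <- r | P j) F j) t.
Proof.
elim: r => // h r IH; rewrite in_cons big_cons => /orP[/eqP <-|ir] Pi Fit.
  by rewrite Pi; left.
by case: (P h); [right|]; exact: IH.
Qed.

Lemma out_prob (d : measure_display) (T : measurableType d) (R : realType) (K : nat) (C : R)
  (Q : probability T R) (X : T -> 'I_K -> R) (Y : T -> {set 'I_K})
  (hX : forall t k, 0 <= X t k <= C)
  (d' : measure_display) (Om : measurableType d') (P : probability Om R)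
  (X' : Om -> 'I_K -> R) (Y' : Om -> {set 'I_K}) :
  data_measurable X' Y' -> same_law Q X Y P X' Y' ->
  P (~` rect_event X' Y' (fun _ => `[0, C]%classic) [set: {set 'I_K}]) = 0%E.
Proof.
move=> hXY' hl.
have mB : forall k : 'I_K, measurable (`[0, C]%classic : set R) by move=> k; exact: measurable_itv.
rewrite probability_setC; last exact: rect_measurable.
rewrite hl //.
have -> : rect_event X Y (fun _ => `[0, C]%classic) [set: {set 'I_K}] = setT.
  apply/seteqP; split => // t _; split; last by rewrite inE.
  by move=> k; rewrite /= in_itv /=; exact: hX.
by rewrite probability_setT subee.
Qed.

Lemma bad_prob (d : measure_display) (T : measurableType d) (R : realType) (K n M : nat)
  (e C al b : R) (Q : probability T R) (X : T -> 'I_K -> R) (Y : T -> {set 'I_K})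
  (d' : measure_display) (Om : measurableType d') (P : probability Om R)
  (Xs : 'I_n -> Om -> 'I_K -> R) (Ys : 'I_n -> Om -> {set 'I_K})
  (a : ({ffun 'I_K -> 'I_M} * {set 'I_K})%type -> R) :
  0 < e -> 0 < C -> 0 < al <= 1 -> (forall c, 0 <= a c <= C) ->
  data_measurable X Y ->
  (forall i, data_measurable (Xs i) (Ys i)) ->
  (forall i, same_law Q X Y P (Xs i) (Ys i)) ->
  mutually_independent P Xs Ys ->
  (P (\big[setU/set0]_(f : {ffun 'I_n -> ({ffun 'I_K -> 'I_M} * {set 'I_K})%type} |
        (n%:R * ((1 + al) * (\sum_c a c * fine (Q (rect_event X Y (@cellB R K M e c) (cellA c)))) + b)
          <= \sum_i a (f i))%R)
      \bigcap_(i in [set: 'I_n]) rect_event (Xs i) (Ys i) (@cellB R K M e (f i)) (cellA (f i)))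
   <= (expR (- (al * n%:R * b / C)))%:E)%E.
Proof.
move=> e0 C0 hal ha hXY hXYs hlaw hind.
set q := fun c => fine (Q (rect_event X Y (@cellB R K M e c) (cellA c))).
have mD : forall c, measurable (rect_event X Y (@cellB R K M e c) (cellA c)).
  by move=> c; exact: (rect_measurable _ hXY (fun k => cellB_meas e c k)).
apply: le_trans (le_measure_bigsetU _ _ _ _) _.
  move=> f; apply: fin_bigcap_measurable; first exact: finite_finset.
  by move=> i _; exact: (rect_measurable _ (hXYs i) (fun k => cellB_meas e _ k)).
apply: (@le_trans _ _ (\sum_(f : {ffun 'I_n -> ({ffun 'I_K -> 'I_M} * {set 'I_K})%type} |
        (n%:R * ((1 + al) * (\sum_c a c * q c) + b) <= \sum_i a (f i))%R)
        (\prod_i q (f i))%:E)%E); last first.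
  rewrite sumEFin lee_fin; apply: chernoff_fin => //.
    by move=> c; apply: fine_ge0; exact: measure_ge0.
  exact: qsum_le1.
apply: lee_sum => f _.
have H := hind (fun i => @cellB R K M e (f i)) (fun i => cellA (f i))
  (fun i k => cellB_meas e _ k).
simpl in H; apply: (eq_le_trans H); rewrite -prodEFin le_eqVlt; apply/orP; left; apply/eqP.
apply: eq_bigr => i _; rewrite hlaw; last by move=> k; exact: cellB_meas.
by rewrite /q fineK // fin_num_measure.
Qed.

Lemma le_eq_trans (disp : Order.disp_t) (U : porderType disp) (x y z : U) :
  (x <= y)%O -> y = z -> (x <= z)%O.
Proof. by move=> h <-. Qed.

Lemma pow_bound (R : realType) (K n : nat) (delta : R) : (0 < K)%N -> (0 < n)%N ->
  0 < delta < 1 ->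
  expR (- (K%:R * ln (3 * n%:R / delta))) *+ ((3 * n) ^ K) <= delta.
Proof.
move=> K0 n0 /andP[d0 d1].
have z0 : 0 < 3 * n%:R / delta by rewrite divr_gt0 // mulr_gt0 // ltr0n.
rewrite -mulrN expRM_natl expRN lnK ?posrE // -(mulr_natl (_ ^+ K)) natrX natrM -exprMn.
have -> : (3%:R * n%:R * (3 * n%:R / delta)^-1) = delta.
  have n0' : n%:R != 0 :> R by rewrite pnatr_eq0 -lt0n.
  by field; rewrite n0' lt0r_neq0.
case: K K0 => // K _; rewrite exprS -[X in _ <= X]mulr1.
by apply: ler_wpM2l; [exact: ltW | apply: exprn_ile1; exact: ltW].
Qed.

Lemma budget (R : realType) (K n : nat) (C alpha L : R) :
  (0 < K)%N -> (0 < n)%N -> 0 < C -> 0 < alpha <= 1 -> 1 < L ->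
  (1 + alpha) * (C / ((3 * n).-1)%:R + 2 * (C * (L - 1) / (4 * n%:R)))
    + C * K%:R * L / (alpha * n%:R)
  <= 2 * C * K%:R * L / (alpha * n%:R).
Proof.
move=> K0 n0 C0 /andP[a0 a1] L1.
have nR1 : 1 <= n%:R :> R by rewrite ler1n.
have mR : ((3 * n).-1)%:R = 3 * n%:R - 1 :> R.
  have h : ((3 * n).-1).+1 = (3 * n)%N by rewrite prednK // muln_gt0.
  by apply: (addIr 1); rewrite subrK natr1 h natrM.
set cn := C / n%:R.
have cn0 : 0 < cn by rewrite divr_gt0 // (lt_le_trans ltr01).
have ecn : cn * n%:R = C by rewrite /cn divfK // gt_eqF // (lt_le_trans ltr01).
set h := C / ((3 * n).-1)%:R.
have m0 : 0 < ((3 * n).-1)%:R :> R by rewrite mR; lra.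
have h0 : 0 < h by rewrite divr_gt0.
have hm : h * (3 * n%:R - 1) = C by rewrite -mR /h divfK // gt_eqF.
have h2 : 2 * h <= cn.
  rewrite -(ler_pM2r (lt_le_trans ltr01 nR1)) ecn -hm.
  have : 0 <= h * (n%:R - 1) by apply: mulr_ge0; lra.
  lra.
have -> : C * (L - 1) / (4 * n%:R) = cn * (L - 1) / 4.
  by rewrite /cn; field; rewrite gt_eqF // (lt_le_trans ltr01).
have -> : C * K%:R * L / (alpha * n%:R) = cn * (K%:R * L / alpha).
  by rewrite /cn; field; rewrite !gt_eqF // (lt_le_trans ltr01).
have -> : 2 * C * K%:R * L / (alpha * n%:R) = 2 * (cn * (K%:R * L / alpha)).
  by rewrite /cn; field; rewrite !gt_eqF // (lt_le_trans ltr01).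
have KL : L <= K%:R * L / alpha.
  have K1 : 1 <= K%:R :> R by rewrite ler1n.
  rewrite ler_pdivlMr // [K%:R * L]mulrC; apply: ler_wpM2l; lra.
have : cn * L <= cn * (K%:R * L / alpha) by rewrite ler_pM2l.
set u := h + 2 * (cn * (L - 1) / 4).
have u0 : 0 <= u.
  have : 0 <= cn * (L - 1) by apply: mulr_ge0; lra.
  rewrite /u; lra.
have : (1 + alpha) * u <= 2 * u by apply: ler_wpM2r => //; lra.
have : cn * (L - 1) = cn * L - cn by ring.
rewrite /u; lra.
Qed.

Unset Implicit Arguments.

Theorem lemma7 (R : realType) (K n : nat) (C : R) (hC : 0 < C)
  (d : measure_display) (T : measurableType d) (Q : probability T R)
  (X : T -> 'I_K -> R) (Y : T -> {set 'I_K})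
  (hXY : data_measurable X Y)
  (hX : forall t k, 0 <= X t k <= C)
  (hY : Q [set t | Y t = finset.set0] = 0%E)
  (d' : measure_display) (Om : measurableType d') (P : probability Om R)
  (Xs : 'I_n -> Om -> 'I_K -> R) (Ys : 'I_n -> Om -> {set 'I_K})
  (hXYs : forall i, data_measurable (Xs i) (Ys i))
  (hlaw : forall i, same_law Q X Y P (Xs i) (Ys i))
  (hind : mutually_independent P Xs Ys)
  (delta : R) (hdelta : 0 < delta < 1) (V0 : 'I_K -> R)
  (alpha : R) (halpha : 0 < alpha <= 1) :
  exists E : set Om, measurable E /\ (P E >= (1 - delta)%:E)%E /\
    forall w, E w ->
      forall V : 'I_K -> R, (forall k, 0 <= V k - V0 k <= C) ->
        (((n%:R)^-1 * \sum_(i < n) dfmax (Xs i w) (Ys i w) V V0)%:E <=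
         (1 + alpha)%:E * 'E_Q[fun t => dfmax (X t) (Y t) V V0] +
         (2 * C * K%:R * ln (3 * n%:R / delta) / (alpha * n%:R))%:E)%E.
Proof.
have [d0 d1] := andP hdelta; have [a0 a1] := andP halpha.
have K0 : (0 < K)%N.
  rewrite lt0n; apply/negP => /eqP K0.
  have HT : [set t | Y t = finset.set0] = setT.
    apply/seteqP; split => t // _ /=; apply/setP => k.
    by have := ltn_ord k; rewrite {2}K0.
  rewrite HT in hY.
  have := etrans (esym hY) (probability_setT Q).
  by move=> [] /eqP; rewrite eq_sym oner_eq0.
have Ege0 : forall V : 'I_K -> R, (forall k, 0 <= V k - V0 k <= C) ->
    (0 <= 'E_Q[fun t => dfmax (X t) (Y t) V V0])%E.
  move=> V hV; rewrite unlock; apply: integral_ge0 => t _; rewrite lee_fin; apply: dfmax_ge0.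
  by move=> k; case/andP: (hV k).
have [n0|n0] := eqVneq n 0%N.
  exists setT; split; first exact: measurableT.
  split.
    apply: le_eq_trans (esym (probability_setT P)).
    by rewrite lee_fin; lra.
  move=> w _ V hV; subst n.
  rewrite invr0 mul0r !mulr0 invr0 mulr0 adde0.
  by apply: mule_ge0; [rewrite lee_fin; lra | exact: Ege0].
have n1 : (0 < n)%N by rewrite lt0n.
set nR := n%:R.
have nR1 : 1 <= nR by rewrite /nR ler1n.
have nR0 : 0 < nR by lra.
set L := ln (3 * nR / delta).
have z0 : 0 < 3 * nR / delta by rewrite divr_gt0 // mulr_gt0.
have L1 : 1 < L.
  rewrite -ltr_expR /L lnK ?posrE //.
  apply: (le_lt_trans (@expR_le_quad R 1 ler01 (lexx _))).
  rewrite expr1n ltr_pdivlMr //.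
  have : 3 * delta < 3 * nR by rewrite ltr_pM2l //; lra.
  lra.
set m := (3 * n).-1.
have mR : m%:R = 3 * nR - 1 :> R.
  have h : m.+1 = (3 * n)%N by rewrite prednK // muln_gt0.
  by apply: (addIr 1); rewrite subrK natr1 h natrM.
have m0 : 0 < m%:R :> R by rewrite mR; lra.
set h := C / m%:R.
have h0 : 0 < h by rewrite divr_gt0.
have mh : m%:R * h = C by rewrite /h mulrC divfK // gt_eqF.
set e := C * (L - 1) / (4 * nR).
have e0 : 0 < e.
  apply: divr_gt0; last by apply: mulr_gt0.
  by apply: mulr_gt0 => //; lra.
set M := Num.truncn (C / e).
have hM : C / e < M.+1%:R by exact: truncnS_gt.
set q := fun c : ({ffun 'I_K -> 'I_M.+1} * {set 'I_K})%type =>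
  fine (Q (rect_event X Y (cellB e c) (cellA c))).
set b := C * K%:R * L / (alpha * nR).
set a := fun (g : {ffun 'I_K -> 'I_m.+1}) (c : ({ffun 'I_K -> 'I_M.+1} * {set 'I_K})%type) =>
  aval C e h V0 g c.
set Bad := fun g : {ffun 'I_K -> 'I_m.+1} =>
  \big[setU/set0]_(f : {ffun 'I_n -> ({ffun 'I_K -> 'I_M.+1} * {set 'I_K})%type} |
      (nR * ((1 + alpha) * (\sum_c a g c * q c) + b) <= \sum_i a g (f i))%R)
    \bigcap_(i in [set: 'I_n]) rect_event (Xs i) (Ys i) (cellB e (f i)) (cellA (f i)).
set Out := fun i : 'I_n =>
  ~` rect_event (Xs i) (Ys i) (fun _ => `[0, C]%classic) [set: {set 'I_K}].
set Bads := \big[setU/set0]_(g : {ffun 'I_K -> 'I_m.+1}) Bad g.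
set Outs := \big[setU/set0]_(i : 'I_n) Out i.
have mBad : forall g, measurable (Bad g).
  move=> g; apply: bigsetU_measurable => f _.
  apply: fin_bigcap_measurable; first exact: finite_finset.
  by move=> i _; exact: (rect_measurable _ (hXYs i) (fun k => cellB_meas e _ k)).
have mOut : forall i, measurable (Out i).
  move=> i; rewrite /Out; apply: measurableC; apply: rect_measurable.
    exact: hXYs.
  by move=> k; apply: measurable_itv.
have mBads : measurable Bads by apply: bigsetU_measurable => g _.
have mOuts : measurable Outs by apply: bigsetU_measurable => i _.
exists (~` (Bads `|` Outs)); split; first by apply: measurableC; exact: measurableU.
split.
  have hOuts : (P Outs <= 0)%E.
    apply: le_trans (le_measure_bigsetU _ _ _ _) _ => //.
    rewrite big1 // => i _; rewrite /Out.
    exact: (out_prob hX (hXYs i) (hlaw i)).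
  have hBads : (P Bads <= delta%:E)%E.
    apply: le_trans (le_measure_bigsetU _ _ _ _) _ => //.
    apply: (@le_trans _ _ (\sum_(g : {ffun 'I_K -> 'I_m.+1}) (expR (- (alpha * nR * b / C)))%:E)%E).
      apply: lee_sum => g _; rewrite /Bad.
      apply: bad_prob => //.
      by move=> c; exact: (aval_bounds _ _ _ e0 (ltW hC) (ltW h0) mh).
    rewrite sumEFin lee_fin sumr_const card_ffun !card_ord.
    have -> : alpha * nR * b / C = K%:R * L.
      by rewrite /b; field; rewrite !gt_eqF.
    have -> : m.+1 = (3 * n)%N by rewrite prednK // muln_gt0.
    exact: pow_bound.
  have hU : (P (Bads `|` Outs) <= delta%:E)%E.
    apply: le_trans (measureU2 _ _ _) _ => //.
    by rewrite -[X in (_ <= X)%E]adde0; apply: leeD.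
  rewrite probability_setC; last exact: measurableU.
  by rewrite EFinB; apply: leeB.
move=> w Ew V hV.
have hV0 : forall k, 0 <= V k - V0 k by move=> k; case/andP: (hV k).
have [g hg] := grid_exists h0 mh hV.
have inR : forall i k, 0 <= Xs i w k <= C.
  move=> i k.
  have : rect_event (Xs i) (Ys i) (fun _ => `[0, C]%classic) [set: {set 'I_K}] w.
    apply: contrapT => H; apply: Ew; right.
    apply: (@in_bigsetU _ _ _ _ _ i) => //; exact: mem_index_enum.
  by move=> [H _]; have := H k; rewrite /= in_itv.
have cells : forall i, exists c : ({ffun 'I_K -> 'I_M.+1} * {set 'I_K})%type,
    (forall k, cellB e c k (Xs i w k)) /\ c.2 = Ys i w.
  by move=> i; exact: (cell_exists (Ys i w) e0 hM (inR i)).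
have [fc hfc] := fin_all_exists cells.
pose f : {ffun 'I_n -> ({ffun 'I_K -> 'I_M.+1} * {set 'I_K})%type} := [ffun i => fc i].
have nthr : ~ (nR * ((1 + alpha) * (\sum_c a g c * q c) + b) <= \sum_i a g (f i))%R.
  move=> Hth; apply: Ew; left.
  apply: (@in_bigsetU _ _ _ _ _ g) => //; first exact: mem_index_enum.
  rewrite /Bad; apply: (@in_bigsetU _ _ _ _ _ f) => //; first exact: mem_index_enum.
  move=> i _; rewrite ffunE; have [h1 h2] := hfc i; split => //.
  by rewrite /cellA inE h2.
have hlt : \sum_i a g (f i) < nR * ((1 + alpha) * (\sum_c a g c * q c) + b).
  by rewrite ltNge; apply/negP.
have hsum : \sum_(i < n) dfmax (Xs i w) (Ys i w) V V0 <= \sum_i a g (f i).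
  apply: ler_sum => i _; rewrite ffunE; have [h1 h2] := hfc i.
  apply: le_trans (@dfmax_monoV R K (Xs i w) (Ys i w) V (gridV V0 h g) V0
    (fun k => proj1 (andP (hg k)))) _.
  rewrite -h2; exact: (@aval_upper R K M.+1 m C e h V0 g (fc i) (Xs i w) e0 (ltW h0) mh h1).
set psi := fun c => Num.max 0 (a g c - (h + 2 * e)).
have hint : (\sum_c (psi c)%:E * Q (rect_event X Y (cellB e c) (cellA c)) <=
    \int[Q]_t (dfmax (X t) (Y t) V V0)%:E)%E.
  apply: int_lb.
  - by move=> c; exact: (rect_measurable _ hXY (fun k => cellB_meas e c k)).
  - by move=> c; rewrite /psi le_max lexx.
  - by move=> c c' t; exact: (@Dt_uniq _ _ _ _ e X Y c c' t e0).
  - move=> c t [h1 h2]; have -> : Y t = c.2 by move: h2; rewrite /cellA inE => /eqP.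
    exact: (@psi_lower R K M.+1 m C e h V V0 g c (X t) e0 (ltW h0) hV0 hg h1).
  - by move=> t; apply: dfmax_ge0.
  - exact: measurable_dfmax.
have hpsi : ((\sum_c psi c * q c)%:E <= 'E_Q[fun t => dfmax (X t) (Y t) V V0])%E.
  rewrite expectation.unlock; apply: le_trans _ hint; rewrite -sumEFin le_eqVlt; apply/orP; left.
  apply/eqP; apply: eq_bigr => c _.
  rewrite EFinM /q fineK // fin_num_measure //.
  exact: (rect_measurable _ hXY (fun k => cellB_meas e c k)).
have q0 : forall c, 0 <= q c by move=> c; apply: fine_ge0; exact: measure_ge0.
have hq1 : \sum_c q c <= 1 := @qsum_le1 d T R Q K M.+1 e X Y e0 hXY.
have u0 : 0 <= h + 2 * e by have := ltW h0; have := ltW e0; lra.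
have hmu : \sum_c a g c * q c <= \sum_c psi c * q c + (h + 2 * e).
  apply: (@le_trans _ _ (\sum_c (psi c + (h + 2 * e)) * q c)).
    apply: ler_sum => c _; apply: ler_wpM2r => //.
    by rewrite -lerBlDr /psi le_max lexx orbT.
  under eq_bigr do rewrite mulrDl.
  rewrite big_split /= -mulr_sumr lerD2l.
  by apply: ler_piMr.
set S := \sum_(i < n) dfmax (Xs i w) (Ys i w) V V0.
set sp := \sum_c psi c * q c.
have hmean : nR^-1 * S <= (1 + alpha) * sp + 2 * C * K%:R * L / (alpha * nR).
  have h1 : nR^-1 * S <= (1 + alpha) * (\sum_c a g c * q c) + b.
    rewrite ler_pdivrMl //; apply: le_trans hsum (ltW hlt).
  have h2 := budget K0 n1 hC halpha L1.
  rewrite -/m -/h -/nR -/L -/e -/b in h2.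
  have h3 : (1 + alpha) * (\sum_c a g c * q c) <= (1 + alpha) * sp + (1 + alpha) * (h + 2 * e).
    by rewrite -mulrDr; apply: ler_wpM2l => //; lra.
  lra.
apply: (@le_trans _ _ (((1 + alpha) * sp + 2 * C * K%:R * L / (alpha * nR))%:E)%E).
  by rewrite lee_fin.
rewrite EFinD EFinM; apply: leeD => //.
by apply: lee_wpmul2l => //; rewrite lee_fin; lra.
Qed.
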